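(* Let $N_r,N_t$ be positive integers and let $\mathbf{H}$ be a random $N_r\times N_t$ complex matrix. For every $\mathrm{snr}>0$, $$I^{\rm mmse}(\mathrm{snr},N_r,N_t)=N_t\,E_{\mathbf H}\big[I^{\rm opt}(\mathrm{snr},N_r,N_t,\mathbf H)\big]-\sum_{i=1}^{N_t}E_{\mathbf H_i}\Big[I^{\rm opt}\Big(\tfrac{N_t-1}{N_t}\mathrm{snr},N_r,N_t-1,\mathbf H_i\Big)\Big],$$ where $\mathbf H_i$ is $\mathbf H$ with its $i$th column removed.
   Context: The channel $\mathbf H$ is normalized so that $E[\mathrm{tr}(\mathbf H\mathbf H^\dagger)]=N_rN_t$. For a deterministic complex matrix $\mathbf G$ with $N_r$ rows and $N$ columns and $\mathrm{snr}>0$, $I^{\rm opt}(\mathrm{snr},N_r,N,\mathbf G)=\log_2\det\big(\mathbf I_{N_r}+\frac{\mathrm{snr}}{N}\mathbf G\mathbf G^\dagger\big)$. The MMSE output SINR of stream $i$ is $\gamma_i=1/\big[(\mathbf I_{N_t}+\frac{\mathrm{snr}}{N_t}\mathbf H^\dagger\mathbf H)^{-1}\big]_{i,i}-1$, where $[\cdot]_{i,i}$ is the $i$th diagonal entry, and the MMSE achievable sum rate is $I^{\rm mmse}(\mathrm{snr},N_r,N_t)=\sum_{i=1}^{N_t}E[\log_2(1+\gamma_i)]$. *)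

(* Defs.v *)
From mathcomp Require Import all_boot all_algebra.
From mathcomp Require Import all_classical all_reals all_analysis.
From mathcomp.real_closed Require Import complex.
Set Implicit Arguments. Unset Strict Implicit. Unset Printing Implicit Defensive.
Import GRing.Theory Num.Theory.
Local Open Scope ring_scope.

Definition log2 {R : realType} (x : R) : R := ln x / ln 2.

Definition adjmx {R : realType} m n (G : 'M[R[i]]_(m, n)) : 'M[R[i]]_(n, m) :=
  (map_mx conjc G)^T.

(* I^opt(snr, Nr, N, G) = log2 det(I_Nr + snr/N G G^dagger).
   The determinant is real (and >= 1) since the matrix is Hermitian PSD + I;
   we take its real part to land in R. *)
Definition Iopt {R : realType} (snr : R) (Nr N : nat) (G : 'M[R[i]]_(Nr, N)) : R :=
  log2 (complex.Re (\det (1%:M + ((snr / N%:R)%:C)%C *: (G *m adjmx G)))).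

Definition mmse_sinr {R : realType} (snr : R) (Nr Nt : nat)
    (H : 'M[R[i]]_(Nr, Nt)) (i : 'I_Nt) : R :=
  complex.Re ((invmx (1%:M + ((snr / Nt%:R)%:C)%C *: (adjmx H *m H)) i i)^-1 - 1).

Definition random_cmatrix {d} {T : measurableType d} {R : realType}
    (Nr Nt : nat) (H : T -> 'M[R[i]]_(Nr, Nt)) : Prop :=
  forall (i : 'I_Nr) (j : 'I_Nt),
    measurable_fun setT (fun w => complex.Re (H w i j)) /\
    measurable_fun setT (fun w => complex.Im (H w i j)).

Definition Immse {d} {T : measurableType d} {R : realType} (P : probability T R)
    (snr : R) (Nr Nt : nat) (H : T -> 'M[R[i]]_(Nr, Nt)) : \bar R :=
  (\sum_(i < Nt) \int[P]_w (log2 (1 + mmse_sinr snr (H w) i))%:E)%E.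

(* Main.v *)
Require Import Defs.
From mathcomp Require Import all_boot all_algebra.
From mathcomp Require Import all_classical all_reals all_analysis.
From mathcomp.real_closed Require Import complex.
From mathcomp Require Import lra ring.
Import order.Order.TTheory GRing.Theory Num.Theory.
Local Open Scope ring_scope.
Module Aux.
Set Implicit Arguments. Unset Strict Implicit. Unset Printing Implicit Defensive.

Lemma sylvester (K : comRingType) m n (A : 'M[K]_(m, n)) (B : 'M[K]_(n, m)) :
  \det (1%:M + A *m B) = \det (1%:M + B *m A).
Proof.
set M := block_mx 1%:M A (- B) 1%:M.
have e1 : block_mx 1%:M 0 B 1%:M *m M = block_mx 1%:M A 0 (1%:M + B *m A).
  rewrite /M mulmx_block !mul1mx !mul0mx !mulmx1 ?add0r ?addr0.
  by rewrite subrr addrC.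
have e2 : block_mx 1%:M (- A) 0 1%:M *m M = block_mx (1%:M + A *m B) 0 (- B) 1%:M.
  rewrite /M mulmx_block !mul1mx !mul0mx !mulmx1 ?add0r ?addr0.
  by rewrite mulNmx mulmxN opprK addrN.
have := congr1 determinant e1; have := congr1 determinant e2.
rewrite !det_mulmx det_ublock det_lblock det_ublock det_lblock !det1 !mul1r ?mulr1.
by move=> -> ->.
Qed.

Section Adj.
Variable R : realType.
Local Notation C := R[i].

Lemma adjmxM m n p (A : 'M[C]_(m, n)) (B : 'M[C]_(n, p)) :
  adjmx (A *m B) = adjmx B *m adjmx A.
Proof. by rewrite /adjmx map_mxM trmx_mul. Qed.

Lemma adjmxK m n (A : 'M[C]_(m, n)) : adjmx (adjmx A) = A.
Proof. by apply/matrixP => i j; rewrite !mxE conjcK. Qed.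

Lemma adjmxD m n (A B : 'M[C]_(m, n)) : adjmx (A + B) = adjmx A + adjmx B.
Proof. by apply/matrixP => i j; rewrite !mxE rmorphD. Qed.

Lemma adjmxN m n (A : 'M[C]_(m, n)) : adjmx (- A) = - adjmx A.
Proof. by apply/matrixP => i j; rewrite !mxE rmorphN. Qed.

Lemma adjmxB m n (A B : 'M[C]_(m, n)) : adjmx (A - B) = adjmx A - adjmx B.
Proof. by rewrite adjmxD adjmxN. Qed.

Lemma adjmx1 n : adjmx (1%:M : 'M[C]_n) = 1%:M.
Proof.
by apply/matrixP => i j; rewrite !mxE eq_sym conjc_nat.
Qed.

Lemma adjmxZ m n (c : C) (A : 'M[C]_(m, n)) : adjmx (c *: A) = conjc c *: adjmx A.
Proof. by apply/matrixP => i j; rewrite !mxE rmorphM. Qed.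

Lemma adjmx_block m1 m2 n1 n2 (Aul : 'M[C]_(m1, n1)) (Aur : 'M[C]_(m1, n2))
  (Adl : 'M[C]_(m2, n1)) (Adr : 'M[C]_(m2, n2)) :
  adjmx (block_mx Aul Aur Adl Adr) = block_mx (adjmx Aul) (adjmx Adl) (adjmx Aur) (adjmx Adr).
Proof. by rewrite /adjmx map_block_mx tr_block_mx. Qed.

Lemma adjmx_col m1 m2 n (A1 : 'M[C]_(m1, n)) (A2 : 'M[C]_(m2, n)) :
  adjmx (col_mx A1 A2) = row_mx (adjmx A1) (adjmx A2).
Proof. by rewrite /adjmx map_col_mx tr_col_mx. Qed.

Lemma conjc_mul_ge0 (x : C) : 0 <= conjc x * x.
Proof. by rewrite mulrC mulcJ_ge0. Qed.

Lemma qf_ge0 m n (v : 'M[C]_(m, n)) (k : 'I_n) : 0 <= (adjmx v *m v) k k.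
Proof.
rewrite !mxE; apply: sumr_ge0 => i _; rewrite !mxE; exact: conjc_mul_ge0.
Qed.

Lemma tr_adj_ge0 m n (B : 'M[C]_(m, n)) : 0 <= \tr (B *m adjmx B).
Proof.
rewrite mxtrace_mulC /mxtrace; apply: sumr_ge0 => i _; exact: qf_ge0.
Qed.

Lemma ge1_real (z : C) : 1 <= z -> z = ((complex.Re z)%:C)%C /\ 1 <= complex.Re z.
Proof.
case: z => a b; rewrite lecE /= => /andP [/eqP b0 h]; by rewrite b0.
Qed.

Lemma ge0_real (z : C) : 0 <= z -> z = ((complex.Re z)%:C)%C /\ 0 <= complex.Re z.
Proof.
case: z => a b; rewrite lecE /= => /andP [/eqP b0 h]; by rewrite b0.
Qed.


Lemma adjmx0 m n : adjmx (0 : 'M[C]_(m, n)) = 0.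
Proof. by apply/matrixP => i j; rewrite !mxE conjc0. Qed.

Definition PDc {n} (A : 'M[C]_n) :=
  adjmx A = A /\ forall v : 'cV[C]_n, (adjmx v *m v) 0 0 <= (adjmx v *m A *m v) 0 0.

Lemma pd_det n (A : 'M[C]_n) : PDc A ->
  1 <= \det A /\ complex.Re (\det A) <= expR (complex.Re (\tr A) - n%:R).
Proof.
elim: n A => [|n IH] A [hA hq].
  rewrite det_mx00 /mxtrace big_ord0 subrr expR0; split => //.
have [] : PDc (A : 'M[C]_(1 + n)) by [].
rewrite -[n.+1]/(1 + n)%N.
move: (A : 'M[C]_(1 + n)) => {hA hq}A hA hq.
move: hA hq; rewrite -(submxK A).
move: (ulsubmx A) (ursubmx A) (dlsubmx A) (drsubmx A) => ul ur dl dr hA hq.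
set a := ul 0 0.
have eul : ul = a%:M by apply: mx11_scalar.
have ha : 1 <= a.
  have := hq (col_mx (1%:M : 'M[C]_1) 0).
  rewrite adjmx_col adjmx1 adjmx0 mul_row_col mul_row_block.
  rewrite !mul1mx !mul0mx ?mulmx0 !addr0 mul_row_col mulmx1 ?mulmx0 ?addr0.
  by rewrite eul !mxE /=.
have [hul hur hdl hdr] := eq_block_mx (etrans (esym (adjmx_block ul ur dl dr)) hA).
have [ea hRa] := ge1_real ha.
have ca : conjc a = a by rewrite ea conjc_real.
have a0 : a != 0 by apply: lt0r_neq0; apply: lt_le_trans ha; exact: ltr01.
set S := dr - dl *m (a^-1 *: ur).
have edec : block_mx ul ur dl dr = block_mx 1%:M 0 (a^-1 *: dl) 1%:M *m block_mx ul ur 0 S.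
  rewrite mulmx_block !mul1mx !mul0mx ?addr0 ?mulmx0 ?add0r ?addr0.
  congr block_mx.
    by rewrite eul -scalemxAl mul_mx_scalar scalerA mulVf // scale1r.
  by rewrite /S -scalemxAl scalemxAr addrC subrK.
have edet : \det (block_mx ul ur dl dr) = a * \det S.
  by rewrite edec det_mulmx det_lblock det_ublock !det1 mul1r eul det_mx11 mul1r mxE eqxx mulr1n.
have hS : PDc S.
  split.
    rewrite /S adjmxB hdr adjmxM adjmxZ hdl conjc_inv ca -scalemxAl scalemxAr.
    by rewrite hur.
  move=> w.
  set x := - (a^-1 *: (ur *m w)).
  have := hq (col_mx x w).
  have ex : ul *m x = - (ur *m w).
    by rewrite /x eul mul_scalar_mx scalerN scalerA mulfV // scale1r.
  rewrite adjmx_col mul_row_col mul_row_block mul_row_col.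
  have -> : (adjmx x *m ul + adjmx w *m dl) *m x + (adjmx x *m ur + adjmx w *m dr) *m w
       = adjmx w *m S *m w.
    rewrite !mulmxDl -!mulmxA ex mulmxN addrAC addKr.
    rewrite /S mulmxBl mulmxBr /x mulmxN mulmxN.
    by rewrite -mulmxA -scalemxAl.
  move=> h; apply: le_trans h; rewrite [X in _ <= X]mxE lerDr; exact: qf_ge0.
have [hd1 hd2] := IH S hS.
rewrite edet; split; first exact: mulr_ege1.
have [eS hRS] := ge1_real hd1.
have etr : \tr S = \tr dr - a^-1 * \tr (dl *m adjmx dl).
  by rewrite /S raddfB /= -scalemxAr mxtraceZ hur.
have [et ht] := ge0_real (tr_adj_ge0 dl).
move: hd2; rewrite etr mxtrace_block trace_mx11 -/a.
rewrite eS ea et; set al := complex.Re a; set de := complex.Re (\det S).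
set t := complex.Re (\tr (dl *m adjmx dl)); set tau := \tr dr.
case: tau => ta tb; rewrite /= => hd2.
rewrite -/de mul0r subr0.
have hal0 : al != 0 by apply: lt0r_neq0; apply: lt_le_trans hRa; exact: ltr01.
have e1 : al / (al ^+ 2 + 0 ^+ 2) * t - - (0 / (al ^+ 2 + 0 ^+ 2)) * 0 = t / al.
  by field.
rewrite e1 in hd2.
have hal : al <= expR (al - 1).
  by have := expR_ge1Dx (al - 1); rewrite addrC subrK.
apply: le_trans (ler_pM _ _ hal hd2) _.
- by apply: le_trans hRa; exact: ler01.
- by apply: le_trans hRS; exact: ler01.
rewrite -expRD ler_expR natrD.
have : 0 <= t / al by apply: divr_ge0 => //; apply: le_trans hRa; exact: ler01.
lra.
Qed.

Definition AG m n (c : R) (G : 'M[C]_(m, n)) : 'M[C]_n :=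
  1%:M + ((c%:C)%C) *: (adjmx G *m G).

Lemma pdAG m n (G : 'M[C]_(m, n)) (c : R) : 0 <= c -> PDc (AG c G).
Proof.
move=> c0; split.
  by rewrite /AG adjmxD adjmx1 adjmxZ conjc_real adjmxM adjmxK.
move=> v; rewrite /AG mulmxDr mulmx1 mulmxDl [X in _ <= X]mxE lerDl.
rewrite -scalemxAr -scalemxAl mxE mulmxA -adjmxM -mulmxA.
by apply: mulr_ge0; [rewrite ler0c | exact: qf_ge0].
Qed.

Lemma minorAG m n (G : 'M[C]_(m, n.+1)) (c : R) (i : 'I_n.+1) :
  row' i (col' i (AG c G)) = AG c (col' i G).
Proof.
apply/matrixP => j k; rewrite !mxE (inj_eq (@lift_inj _ i)); congr (_ + _ * _).
by apply: eq_bigr => r _; rewrite !mxE.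
Qed.

Lemma det_sylv m n (G : 'M[C]_(m, n)) (c : R) :
  \det (1%:M + ((c%:C)%C) *: (G *m adjmx G)) = \det (AG c G).
Proof. by rewrite scalemxAl sylvester /AG -scalemxAr. Qed.


Lemma detAG_real m n (G : 'M[C]_(m, n)) (c : R) : 0 <= c ->
  \det (AG c G) = ((complex.Re (\det (AG c G)))%:C)%C /\ 1 <= complex.Re (\det (AG c G)).
Proof. by move=> c0; have [h _] := pd_det (pdAG G c0); exact: ge1_real. Qed.

Lemma mmse_AG m n (G : 'M[C]_(m, n.+1)) (snr : R) (i : 'I_n.+1) : 0 <= snr ->
  1 + mmse_sinr snr G i =
  complex.Re (\det (AG (snr / n.+1%:R) G)) / complex.Re (\det (AG (snr / n.+1%:R) (col' i G))).
Proof.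
move=> s0; have c0 : 0 <= snr / n.+1%:R by apply: divr_ge0.
rewrite /mmse_sinr -/(AG _ G).
have [eA hA] := detAG_real G c0.
have [eM hM] := detAG_real (col' i G) c0.
set A := AG _ G in eA hA *; set M := AG _ (col' i G) in eM hM *.
have uA : A \in unitmx.
  rewrite unitmxE unitfE eA; apply/eqP => /complexI/eqP.
  by apply/negP; apply: lt0r_neq0; apply: lt_le_trans hA; exact: ltr01.
have hM0 : complex.Re (\det M) != 0.
  by apply: lt0r_neq0; apply: lt_le_trans hM; exact: ltr01.
rewrite /invmx uA !mxE /cofactor -signr_odd oddD addbb expr0 mul1r.
rewrite minorAG -/M eA eM.
set al := complex.Re (\det A); set mu := complex.Re (\det M).
have -> : (((al%:C)%C)^-1 * (mu%:C)%C)^-1 - 1 = (((al / mu - 1)%:C)%C : C).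
  by rewrite rmorphB rmorph1 rmorphM fmorphV invfM invrK mulrC.
by rewrite /= addrC subrK.
Qed.

Lemma Iopt_AG m n (G : 'M[C]_(m, n)) (snr : R) :
  Iopt snr G = log2 (complex.Re (\det (AG (snr / n%:R) G))).
Proof. by rewrite /Iopt det_sylv. Qed.

Lemma Iopt_col' m n (G : 'M[C]_(m, n.+1)) (snr : R) (i : 'I_n.+1) :
  Iopt ((n.+1%:R - 1) / n.+1%:R * snr) (col' i G) =
  log2 (complex.Re (\det (AG (snr / n.+1%:R) (col' i G)))).
Proof.
case: n G i => [|k] G i.
  rewrite det_mx00 /Iopt.
  have -> : col' i G *m adjmx (col' i G) = 0.
    by apply/matrixP => p q; rewrite !mxE big_ord0.
  by rewrite scaler0 addr0 det1.
have h1 : (k.+1%:R : R) != 0 by rewrite pnatr_eq0.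
have h2 : (k.+2%:R : R) != 0 by rewrite pnatr_eq0.
have e : (k.+2%:R : R) - 1 = k.+1%:R by rewrite [(k.+2%:R : R)]mulrS addrC addrK.
rewrite Iopt_AG.
have -> : (k.+2%:R - 1) / k.+2%:R * snr / k.+2.-1%:R = snr / k.+2%:R.
  rewrite e /=; field; have hk : (0:R) <= k%:R := ler0n _ k; by apply/andP; split; apply/eqP => h; lra.
by [].
Qed.

Lemma key m n (G : 'M[C]_(m, n.+1)) (snr : R) (i : 'I_n.+1) : 0 <= snr ->
  log2 (1 + mmse_sinr snr G i) =
  Iopt snr G - Iopt ((n.+1%:R - 1) / n.+1%:R * snr) (col' i G).
Proof.
move=> s0; have c0 : 0 <= snr / n.+1%:R by apply: divr_ge0.
rewrite mmse_AG // Iopt_col' Iopt_AG /log2 -mulrBl; congr (_ / _).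
have [_ hA] := detAG_real G c0; have [_ hM] := detAG_real (col' i G) c0.
rewrite ln_div // posrE; apply: lt_le_trans (ltr01) _; assumption.
Qed.

Lemma ReD (x y : C) : complex.Re (x + y) = complex.Re x + complex.Re y.
Proof. by case: x => ? ?; case: y. Qed.

Lemma ReN k : complex.Re (k%:R : C) = k%:R.
Proof. by elim: k => // k IH; rewrite !mulrS ReD IH. Qed.

Lemma Re_ge0 (x : C) : 0 <= x -> 0 <= complex.Re x.
Proof. by move=> /ge0_real []. Qed.

Lemma ln2_gt0 : 0 < ln (2 : R).
Proof. by apply: ln_gt0; rewrite ltr1n. Qed.

Lemma log2_AG_bounds m n (G : 'M[C]_(m, n)) (c : R) : 0 <= c ->
  0 <= log2 (complex.Re (\det (AG c G))) <=
  c / ln 2 * complex.Re (\tr (G *m adjmx G)).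
Proof.
move=> c0; have [_ h1] := detAG_real G c0.
have [_ h2] := pd_det (pdAG G c0).
have [et ht] := ge0_real (tr_adj_ge0 G).
have l2 := ln2_gt0.
have h1' : 0 < complex.Re (\det (AG c G)) by apply: lt_le_trans h1; exact: ltr01.
apply/andP; split.
  by rewrite /log2; apply: divr_ge0; [exact: ln_ge0 | exact: ltW].
set tau := complex.Re (\tr (G *m adjmx G)) in et ht *.
move: h2; rewrite /AG mxtraceD mxtrace1 mxtraceZ mxtrace_mulC et => h2.
have e : complex.Re (n%:R + (c%:C)%C * (tau%:C)%C) - n%:R = c * tau.
  by rewrite -rmorphM ReD ReN addrAC subrr add0r.
rewrite e in h2.
rewrite /log2 mulrAC ler_pM2r ?invr_gt0 //.
have := h2; rewrite -(ler_ln h1'); last by rewrite posrE expR_gt0.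
by rewrite expRK.
Qed.

Lemma tr_col'_le m n (G : 'M[C]_(m, n.+1)) (i : 'I_n.+1) :
  complex.Re (\tr (col' i G *m adjmx (col' i G))) <= complex.Re (\tr (G *m adjmx G)).
Proof.
rewrite mxtrace_mulC [X in _ <= complex.Re X]mxtrace_mulC.
have -> : \tr (adjmx G *m G) = (adjmx G *m G) i i + \tr (adjmx (col' i G) *m col' i G).
  rewrite /mxtrace (bigD1_ord i) //; congr (_ + _); apply: eq_bigr => j _.
  by rewrite !mxE; apply: eq_bigr => r _; rewrite !mxE.
by rewrite ReD lerDr; apply: Re_ge0; exact: qf_ge0.
Qed.

End Adj.


Section Meas.
Variables (d : measure_display) (T : measurableType d) (R : realType).
Local Notation C := R[i].

Definition mC (f : T -> C) :=
  measurable_fun setT (fun w => complex.Re (f w)) /\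
  measurable_fun setT (fun w => complex.Im (f w)).

Lemma mC_cst (c : C) : mC (fun => c).
Proof. by split; apply: measurable_cst. Qed.

Lemma mC_add f g : mC f -> mC g -> mC (fun w => f w + g w).
Proof.
move=> [f1 f2] [g1 g2]; split.
  have -> : (fun w => complex.Re (f w + g w)) = (fun w => complex.Re (f w)) \+ (fun w => complex.Re (g w)).
    by apply/funext => w /=; case: (f w) => ? ?; case: (g w).
  exact: measurable_realfun.measurable_funD.
have -> : (fun w => complex.Im (f w + g w)) = (fun w => complex.Im (f w)) \+ (fun w => complex.Im (g w)).
  by apply/funext => w /=; case: (f w) => ? ?; case: (g w).
exact: measurable_realfun.measurable_funD.
Qed.

Lemma mC_mul f g : mC f -> mC g -> mC (fun w => f w * g w).
Proof.
move=> [f1 f2] [g1 g2]; split.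
  have -> : (fun w => complex.Re (f w * g w)) =
     ((fun w => complex.Re (f w)) \* (fun w => complex.Re (g w))) \-
     ((fun w => complex.Im (f w)) \* (fun w => complex.Im (g w))).
    by apply/funext => w /=; case: (f w) => ? ?; case: (g w).
  by apply: measurable_realfun.measurable_funB; apply: measurable_realfun.measurable_funM.
have -> : (fun w => complex.Im (f w * g w)) =
     ((fun w => complex.Re (f w)) \* (fun w => complex.Im (g w))) \+
     ((fun w => complex.Im (f w)) \* (fun w => complex.Re (g w))).
  by apply/funext => w /=; case: (f w) => ? ?; case: (g w).
by apply: measurable_realfun.measurable_funD; apply: measurable_realfun.measurable_funM.
Qed.

Lemma mC_conj f : mC f -> mC (fun w => conjc (f w)).
Proof.
move=> [f1 f2]; split.
  have -> : (fun w => complex.Re (conjc (f w))) = (fun w => complex.Re (f w)).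
    by apply/funext => w /=; case: (f w).
  exact: f1.
have -> : (fun w => complex.Im (conjc (f w))) = (fun w => - complex.Im (f w)).
  by apply/funext => w /=; case: (f w).
exact: measurable_realfun.measurable_funN.
Qed.

Lemma mC_sum (I : Type) (s : seq I) (P : pred I) (F : I -> T -> C) :
  (forall i, mC (F i)) -> mC (fun w => \sum_(i <- s | P i) F i w).
Proof.
move=> hF; elim: s => [|x s IH].
  have -> : (fun w => \sum_(i <- [::] | P i) F i w) = fun => 0 by apply/funext => w; rewrite big_nil.
  exact: mC_cst.
have -> : (fun w => \sum_(i <- x :: s | P i) F i w) =
  fun w => (if P x then F x w else 0) + \sum_(i <- s | P i) F i w.
  by apply/funext => w; rewrite big_cons; case: (P x); rewrite ?add0r.
apply: mC_add => //; case: (P x) => //; exact: mC_cst.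
Qed.

Lemma mC_prod (I : Type) (s : seq I) (P : pred I) (F : I -> T -> C) :
  (forall i, mC (F i)) -> mC (fun w => \prod_(i <- s | P i) F i w).
Proof.
move=> hF; elim: s => [|x s IH].
  have -> : (fun w => \prod_(i <- [::] | P i) F i w) = fun => 1 by apply/funext => w; rewrite big_nil.
  exact: mC_cst.
have -> : (fun w => \prod_(i <- x :: s | P i) F i w) =
  fun w => (if P x then F x w else 1) * \prod_(i <- s | P i) F i w.
  by apply/funext => w; rewrite big_cons; case: (P x); rewrite ?mul1r.
apply: mC_mul => //; case: (P x) => //; exact: mC_cst.
Qed.

Definition mM m n (F : T -> 'M[C]_(m, n)) := forall i j, mC (fun w => F w i j).

Lemma mC_det n (F : T -> 'M[C]_n) : mM F -> mC (fun w => \det (F w)).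
Proof.
move=> hF; rewrite /determinant; apply: mC_sum => s.
apply: mC_mul; first exact: mC_cst.
by apply: mC_prod => i; exact: hF.
Qed.

Lemma mC_tr n (F : T -> 'M[C]_n) : mM F -> mC (fun w => \tr (F w)).
Proof. by move=> hF; apply: mC_sum => i; exact: hF. Qed.

Lemma mM_mul m n p (F : T -> 'M[C]_(m, n)) (G : T -> 'M[C]_(n, p)) :
  mM F -> mM G -> mM (fun w => F w *m G w).
Proof.
move=> hF hG i j.
have -> : (fun w => (F w *m G w) i j) = fun w => \sum_k F w i k * G w k j.
  by apply/funext => w; rewrite mxE.
by apply: mC_sum => k; apply: mC_mul.
Qed.

Lemma mM_add m n (F G : T -> 'M[C]_(m, n)) : mM F -> mM G -> mM (fun w => F w + G w).
Proof.
move=> hF hG i j.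
have -> : (fun w => (F w + G w) i j) = fun w => F w i j + G w i j.
  by apply/funext => w; rewrite mxE.
exact: mC_add.
Qed.

Lemma mM_scale m n (c : C) (F : T -> 'M[C]_(m, n)) : mM F -> mM (fun w => c *: F w).
Proof.
move=> hF i j.
have -> : (fun w => (c *: F w) i j) = fun w => c * F w i j.
  by apply/funext => w; rewrite mxE.
apply: mC_mul => //; exact: mC_cst.
Qed.

Lemma mM_cst m n (A : 'M[C]_(m, n)) : mM (fun => A).
Proof. by move=> i j; apply: mC_cst. Qed.

Lemma mM_adj m n (F : T -> 'M[C]_(m, n)) : mM F -> mM (fun w => adjmx (F w)).
Proof.
move=> hF i j.
have -> : (fun w => (adjmx (F w)) i j) = fun w => conjc (F w j i).
  by apply/funext => w; rewrite !mxE.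
exact: mC_conj.
Qed.

Lemma mM_col' m n (F : T -> 'M[C]_(m, n)) (k : 'I_n) : mM F -> mM (fun w => col' k (F w)).
Proof.
move=> hF i j.
have -> : (fun w => (col' k (F w)) i j) = fun w => F w i (lift k j).
  by apply/funext => w; rewrite !mxE.
exact: hF.
Qed.

End Meas.

End Aux.
Import Aux.

Lemma mlog2AG (d : measure_display) (T : measurableType d) (R : realType) m n
  (F : T -> 'M[R[i]]_(m, n)) (c : R) : mM F ->
  measurable_fun setT (fun w => log2 (complex.Re (\det (AG c (F w))))).
Proof.
move=> hF.
have [h _] : mC (fun w => \det (AG c (F w))).
  apply: mC_det; apply: mM_add; first exact: mM_cst.
  by apply: mM_scale; apply: mM_mul; [apply: mM_adj|].
rewrite /log2.
have -> : (fun w => ln (complex.Re (\det (AG c (F w)))) / ln 2) =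
  ((@ln R) \o (fun w => complex.Re (\det (AG c (F w))))) \* (fun => (ln (2:R))^-1).
  by apply/funext.
apply: measurable_realfun.measurable_funM; last exact: measurable_cst.
by apply: measurableT_comp h; exact: measurable_realfun.measurable_ln.
Qed.

Lemma abs_le (R : realDomainType) (x y : R) : 0 <= x -> x <= y -> `|x| <= `|y|.
Proof.
move=> h1 h2; rewrite (ger0_norm h1) (ger0_norm (le_trans h1 h2)); exact: h2.
Qed.

Theorem theorem1 (d : measure_display) (T : measurableType d) (R : realType)
    (P : probability T R) (Nr Nt : nat) (H : T -> 'M[R[i]]_(Nr, Nt))
    (snr : R) :
  (0 < Nr)%N -> (0 < Nt)%N ->
  random_cmatrix H ->
  (* normalization E[tr(H H^dagger)] = Nr Nt *)
  (\int[P]_w (complex.Re (\tr (H w *m adjmx (H w))))%:E = (Nr * Nt)%:R%:E)%E ->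
  0 < snr ->
  Immse P snr H =
  (Nt%:R%:E * \int[P]_w (Iopt snr (H w))%:E
   - \sum_(i < Nt)
       \int[P]_w (Iopt ((Nt%:R - 1) / Nt%:R * snr) (col' i (H w)))%:E)%E.
Proof.
move=> Nr0 Nt0 hH htr snr0.
case: Nt H Nt0 hH htr => [//|n] H _ hH htr.
have mH : mM H by move=> i j; exact: hH.
have s0 : 0 <= snr by exact: ltW.
set c := snr / n.+1%:R.
have c0 : 0 <= c by apply: divr_ge0.
set K := c / ln 2.
have K0 : 0 <= K by apply: divr_ge0 => //; exact: ltW (ln2_gt0 R).
set F := fun w => Iopt snr (H w).
set G := fun i w => Iopt ((n.+1%:R - 1) / n.+1%:R * snr) (col' i (H w)).
set t := fun w => complex.Re (\tr (H w *m adjmx (H w))).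
have t0 w : 0 <= t w by apply: Re_ge0; exact: tr_adj_ge0.
have mt : measurable_fun setT t.
  have [h _] : mC (fun w => \tr (H w *m adjmx (H w))).
    by apply: mC_tr; apply: mM_mul => //; exact: mM_adj.
  exact: h.
have eF : F = fun w => log2 (complex.Re (\det (AG c (H w)))).
  by apply/funext => w; rewrite /F Iopt_AG.
have eG i : G i = fun w => log2 (complex.Re (\det (AG c (col' i (H w))))).
  by apply/funext => w; rewrite /G Iopt_col'.
have mF : measurable_fun setT F by rewrite eF; exact: mlog2AG.
have mG i : measurable_fun setT (G i).
  by rewrite eG; apply: mlog2AG; exact: mM_col'.
have bF w : 0 <= F w <= K * t w.
  by rewrite eF; exact: log2_AG_bounds.
have bG i w : 0 <= G i w <= K * t w.
  rewrite eG; have /andP [h1 h2] := log2_AG_bounds (col' i (H w)) c0.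
  rewrite h1 /=; apply: le_trans h2 _; rewrite /K /t; apply: ler_wpM2l => //.
  exact: tr_col'_le.
have it : P.-integrable setT (EFin \o t).
  apply/integrableP; split; first by apply/measurable_realfun.measurable_EFinP.
  rewrite (eq_integral (fun w => (t w)%:E)); last first.
    by move=> w _; apply: gee0_abs; rewrite lee_fin.
  by rewrite htr ltry.
have iK : P.-integrable setT (fun w => (K * t w)%:E).
  have := @integrableZl _ _ _ P setT measurableT K _ it.
  by apply: eq_integrable => // w _; rewrite /= EFinM.
have iF : P.-integrable setT (EFin \o F).
  apply: le_integrable iK => //; first by apply/measurable_realfun.measurable_EFinP.
  move=> w _; have /andP [h1 h2] := bF w.
  change ((`|(F w)%:E| <= `|(K * t w)%:E|)%E).
  rewrite !abse_EFin lee_fin; exact: abs_le h1 h2.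
have iG i : P.-integrable setT (EFin \o G i).
  apply: le_integrable iK => //; first exact/measurable_realfun.measurable_EFinP/mG.
  move=> w _; have /andP [h1 h2] := bG i w.
  change ((`|(G i w)%:E| <= `|(K * t w)%:E|)%E).
  rewrite !abse_EFin lee_fin; exact: abs_le h1 h2.
have eI i : (\int[P]_w (log2 (1 + mmse_sinr snr (H w) i))%:E =
    \int[P]_w (Iopt snr (H w))%:E -
    \int[P]_w (Iopt ((n.+1%:R - 1) / n.+1%:R * snr) (col' i (H w)))%:E)%E.
  rewrite -integralB_EFin; [|exact: measurableT|exact: iF|exact: iG].
  apply: eq_integral => w _.
  by rewrite key // EFinB.
rewrite /Immse (eq_bigr _ (fun i _ => eI i)).
have [a ea] : exists a : R, (\int[P]_w (Iopt snr (H w))%:E = a%:E)%E.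
  exists (fine (\int[P]_w (Iopt snr (H w))%:E)); rewrite fineK; first by [].
  by apply: integrable_fin_num; [exact: measurableT|exact: iF].
have [b eb] : exists b : 'I_n.+1 -> R, forall i,
    (\int[P]_w (Iopt ((n.+1%:R - 1) / n.+1%:R * snr) (col' i (H w)))%:E = (b i)%:E)%E.
  exists (fun i => fine (\int[P]_w (Iopt ((n.+1%:R - 1) / n.+1%:R * snr) (col' i (H w)))%:E)).
  move=> i; rewrite fineK; first by [].
  by apply: integrable_fin_num; [exact: measurableT|exact: (iG i)].
transitivity (\sum_(i < n.+1) ((a - b i)%:E))%E.
  by apply: eq_bigr => i _; rewrite EFinB -ea -eb.
have eL : (\sum_(i < n.+1) (a - b i)%:E = (n.+1%:R)%:E * a%:E - \sum_(i < n.+1) (b i)%:E)%E.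
  rewrite !sumEFin -EFinM -EFinB; congr EFin.
  by rewrite sumrB sumr_const card_ord mulr_natl.
rewrite eL.
congr (_ * _ - _)%E; first exact: (esym ea).
by apply: eq_bigr => i _; exact: (esym (eb i)).
Qed.
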